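(* Let $\theta\in(0,1)$ be irrational, $k\ge1$ even, $\ell\ge1$, and $1\le i\le q_k$. (a) If $a_{k+j}=1$ for all $2\le j\le\ell$, then $$\#\{1\le j\le q_{k+\ell}: j\theta\in(i\theta-\|q_k\theta\|,\ i\theta+\tilde r_{k+1}\|q_k\theta\|+\|q_{k+1}\theta\|)\}\ge u_\ell\tilde r_{k+1}+u_{\ell+1}.$$ (b) If $a_{k+2}=2$ and $a_{k+j}=1$ for all $3\le j\le\ell$, then $$\#\{1\le j\le q_{k+\ell}: j\theta\in(i\theta-\|q_{k+1}\theta\|-\|q_{k+2}\theta\|,\ i\theta+\tilde r_{k+1}\|q_k\theta\|+\|q_{k+1}\theta\|)\}\ge u_{\ell+1}(\tilde r_{k+1}+1).$$
   Context: $\mathbb T=\mathbb R/\mathbb Z$, points identified with fractional parts; $(x-a,x+b)$ denotes the projection to $\mathbb T$ of the real interval. $\|t\|$ is the distance to the nearest integer. $\theta=[0;a_1,a_2,\dots]$ with convergent denominators $q_0=1$, $q_{k+1}=a_{k+1}q_k+q_{k-1}$. $(u_j)$ is the Fibonacci sequence $u_0=0,u_1=1,u_{j+1}=u_j+u_{j-1}$. For $k\ge0$: $r_{k+1}=\lfloor\sqrt{4a_{k+1}+5}\rfloor-3$ if $a_{k+1}\ne2$ and $r_{k+1}=1$ if $a_{k+1}=2$; $\tilde r_{k+1}=2$ if $a_{k+1}=4$ and $a_{k+2}\ge2$, and $\tilde r_{k+1}=r_{k+1}$ otherwise. *)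

(* Defs.v *)
From Stdlib Require Import Reals Lra Lia ZArith Arith Classical ClassicalEpsilon.
Open Scope R_scope.

Definition fracR (t : R) : R := t - IZR (Int_part t).
Definition dnorm (t : R) : R := Rmin (fracR t) (1 - fracR t).

Fixpoint gx (theta : R) (n : nat) : R :=
  match n with
  | O => theta
  | S m => fracR (/ gx theta m)
  end.

(* partial quotients: theta = [0; a_1, a_2, ...], a_{n+1} = floor(1/x_n) *)
Definition cf_a (theta : R) (n : nat) : nat :=
  match n with
  | O => 0%nat
  | S m => Z.to_nat (Int_part (/ gx theta m))
  end.

(* convergent denominators: q_0 = 1, q_1 = a_1, q_{k+1} = a_{k+1} q_k + q_{k-1} *)
Fixpoint cf_qpair (theta : R) (n : nat) : nat * nat :=
  match n with
  | O => (1%nat, cf_a theta 1)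
  | S m => let (x, y) := cf_qpair theta m in
           (y, (cf_a theta (S (S m)) * y + x)%nat)
  end.
Definition cf_q (theta : R) (n : nat) : nat := fst (cf_qpair theta n).

(* Fibonacci: u_0 = 0, u_1 = 1 *)
Fixpoint fibpair (n : nat) : nat * nat :=
  match n with
  | O => (0%nat, 1%nat)
  | S m => let (x, y) := fibpair m in (y, (x + y)%nat)
  end.
Definition fibu (n : nat) : nat := fst (fibpair n).

Definition r_ (theta : R) (n : nat) : nat :=
  if Nat.eqb (cf_a theta n) 2 then 1%nat
  else (Nat.sqrt (4 * cf_a theta n + 5) - 3)%nat.

Definition rt_ (theta : R) (n : nat) : nat :=
  if andb (Nat.eqb (cf_a theta n) 4) (Nat.leb 2 (cf_a theta (S n))) then 2%nat
  else r_ theta n.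

(* y in T lies in the projection to T of the real interval (lo, hi) *)
Definition in_arc (lo hi y : R) : Prop := exists m : Z, lo < y + IZR m < hi.

Fixpoint count_upto (N : nat) (P : nat -> Prop) : nat :=
  match N with
  | O => 0%nat
  | S M => ((if excluded_middle_informative (P (S M)) then 1 else 0)
            + count_upto M P)%nat
  end.

Definition irrational (x : R) : Prop :=
  forall (p : Z) (q : Z), q <> 0%Z -> x <> IZR p / IZR q.

Example q_test : cf_qpair 0 3 = (cf_q 0 3, cf_q 0 4). Proof. reflexivity. Qed.
Example fib_test : fibu 7 = 13%nat. Proof. reflexivity. Qed.

(* Main.v *)
Require Import Defs.
From Stdlib Require Import Reals Arith ZArith Lra Lia List Classical ClassicalEpsilon.
Open Scope R_scope.

Lemma frac_range t : 0 <= fracR t < 1.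
Proof. unfold fracR; destruct (base_Int_part t); lra. Qed.

Lemma gx_range th n : 0 < th < 1 -> 0 <= gx th n < 1.
Proof. intros H; destruct n; simpl; [lra | apply frac_range]. Qed.

Lemma gx_step th n : 0 < th < 1 -> 0 < gx th n ->
  INR (cf_a th (S n)) = / gx th n - gx th (S n) /\ (1 <= cf_a th (S n))%nat.
Proof.
  intros Hth Hx. pose proof (gx_range th n Hth) as Hr.
  assert (Hi : 1 < / gx th n).
  { apply (Rmult_lt_reg_l (gx th n)); [lra|]. rewrite Rinv_r; lra. }
  simpl. unfold fracR. set (z := Int_part (/ gx th n)).
  destruct (base_Int_part (/ gx th n)) as [H1 H2]. fold z in H1, H2.
  assert (Hz : (0 < z)%Z) by (apply lt_IZR; lra).
  rewrite INR_IZR_INZ, Z2Nat.id by lia. split; [lra | lia].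
Qed.

Fixpoint dl th n := match n with O => gx th 0 | S m => dl th m * gx th (S m) end.
Definition sg (n : nat) (x : R) := if Nat.even n then x else - x.

Lemma q0 th : cf_q th 0 = 1%nat. Proof. reflexivity. Qed.
Lemma q1 th : cf_q th 1 = cf_a th 1. Proof. reflexivity. Qed.
Lemma qpair_fst th m : fst (cf_qpair th (S m)) = snd (cf_qpair th m).
Proof. simpl. destruct (cf_qpair th m); reflexivity. Qed.
Lemma qSS th m : cf_q th (S (S m)) = (cf_a th (S (S m)) * cf_q th (S m) + cf_q th m)%nat.
Proof.
  unfold cf_q. rewrite qpair_fst. rewrite (qpair_fst th m). simpl.
  destruct (cf_qpair th m); reflexivity.
Qed.

Lemma irr_int th q P : irrational th -> (1 <= q)%nat -> INR q * th <> IZR P.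
Proof.
  intros Hirr Hq E. apply (Hirr P (Z.of_nat q)); [lia|].
  rewrite <- INR_IZR_INZ. assert (0 < INR q) by (apply lt_0_INR; lia).
  rewrite <- E. field. lra.
Qed.

Lemma cf_main th : 0 < th < 1 -> irrational th -> forall n,
  0 < gx th n /\ 0 < gx th (S n) /\ (1 <= cf_q th n)%nat /\ (1 <= cf_q th (S n))%nat /\
  (exists P, INR (cf_q th n) * th = IZR P + sg n (dl th n)) /\
  (exists P, INR (cf_q th (S n)) * th = IZR P + sg (S n) (dl th (S n))).
Proof.
  intros Hth Hirr. induction n as [|n IH].
  - destruct (gx_step th 0 Hth ltac:(simpl; lra)) as [Ha Ha1].
    change (gx th 0) with th in Ha.
    assert (Hp : INR (cf_q th 1) * th = IZR 1 + sg 1 (dl th 1)).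
    { rewrite q1, Ha. unfold sg; simpl. field. lra. }
    assert (Hg : 0 < gx th 1).
    { destruct (gx_range th 1 Hth) as [G _]. destruct G as [G|G]; [exact G|].
      exfalso. apply (irr_int th (cf_q th 1) 1 Hirr); [rewrite q1; lia|].
      rewrite Hp. unfold sg. change (dl th 1) with (gx th 0 * gx th 1). rewrite <- G. simpl Nat.even. cbv iota. ring. }
    split; [simpl; lra|]. split; [exact Hg|]. split; [rewrite q0; lia|]. split; [rewrite q1; lia|].
    split; [exists 0%Z; rewrite q0; unfold sg; simpl; ring | exists 1%Z; exact Hp].
  - destruct IH as [G0 [G1 [Q0 [Q1 [[P0 E0] [P1 E1]]]]]].
    destruct (gx_step th (S n) Hth G1) as [Ha Ha1].
    assert (Hd : dl th (S (S n)) = dl th n - INR (cf_a th (S (S n))) * dl th (S n)).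
    { change (dl th (S (S n))) with (dl th n * gx th (S n) * gx th (S (S n))).
      replace (gx th (S (S n))) with (/ gx th (S n) - INR (cf_a th (S (S n)))) by lra.
      change (dl th (S n)) with (dl th n * gx th (S n)). field. lra. }
    assert (Hq : (1 <= cf_q th (S (S n)))%nat) by (rewrite qSS; nia).
    assert (Hp : INR (cf_q th (S (S n))) * th =
               IZR (Z.of_nat (cf_a th (S (S n))) * P1 + P0) + sg (S (S n)) (dl th (S (S n)))).
    { rewrite qSS, plus_INR, mult_INR, plus_IZR, mult_IZR, <- INR_IZR_INZ.
      rewrite Rmult_plus_distr_r, Rmult_assoc, E0, E1, Hd.
      unfold sg. change (Nat.even (S (S n))) with (Nat.even n).
      rewrite Nat.even_succ, <- Nat.negb_even. destruct (Nat.even n); simpl; ring. }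
    assert (Hg : 0 < gx th (S (S n))).
    { destruct (gx_range th (S (S n)) Hth) as [G _]. destruct G as [G|G]; [exact G|].
      exfalso. apply (irr_int th _ (Z.of_nat (cf_a th (S (S n))) * P1 + P0) Hirr Hq). rewrite Hp.
      replace (dl th (S (S n))) with 0 by (change (dl th (S (S n))) with (dl th (S n) * gx th (S (S n))); rewrite <- G; ring).
      unfold sg; destruct (Nat.even _); rewrite ?Ropp_0; ring. }
    repeat split; try assumption. exists P1; exact E1. eexists; exact Hp.
Qed.

Section CF.
Variable th : R.
Hypothesis Hth : 0 < th < 1.
Hypothesis Hirr : irrational th.

Lemma gx_pos n : 0 < gx th n.
Proof. apply (cf_main th Hth Hirr n). Qed.
Lemma a_pos n : (1 <= cf_a th (S n))%nat.
Proof. apply (gx_step th n Hth (gx_pos n)). Qed.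
Lemma q_pos n : (1 <= cf_q th n)%nat.
Proof. apply (cf_main th Hth Hirr n). Qed.
Lemma pos_q n : exists P, INR (cf_q th n) * th = IZR P + sg n (dl th n).
Proof. apply (cf_main th Hth Hirr n). Qed.
Lemma dl_pos n : 0 < dl th n.
Proof. induction n. apply (gx_pos 0). change (dl th (S n)) with (dl th n * gx th (S n)). pose proof (gx_pos (S n)). nra. Qed.
Lemma dl_dec n : dl th (S n) < dl th n.
Proof. change (dl th (S n)) with (dl th n * gx th (S n)).
  pose proof (dl_pos n). destruct (gx_range th (S n) Hth). nra. Qed.
Lemma dl_lt1 n : dl th n < 1.
Proof. induction n. simpl. lra. pose proof (dl_dec n). lra. Qed.
Lemma dl_rec n : dl th (S (S n)) = dl th n - INR (cf_a th (S (S n))) * dl th (S n).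
Proof.
  destruct (gx_step th (S n) Hth (gx_pos (S n))) as [Ha _].
  pose proof (gx_pos (S n)).
  change (dl th (S (S n))) with (dl th n * gx th (S n) * gx th (S (S n))).
  replace (gx th (S (S n))) with (/ gx th (S n) - INR (cf_a th (S (S n)))) by lra.
  change (dl th (S n)) with (dl th n * gx th (S n)). field. lra.
Qed.
Lemma dl_half n : dl th (S (S n)) < / 2.
Proof.
  pose proof (a_pos (S n)) as H. apply le_INR in H. change (INR 1) with 1 in H.
  pose proof (dl_pos (S n)). pose proof (dl_dec (S n)). pose proof (dl_lt1 n).
  pose proof (dl_rec n).
  assert (INR (cf_a th (S (S n))) * dl th (S n) >= dl th (S n)) by nra. lra.
Qed.

Lemma dnorm_sg P n d : 0 < d < / 2 -> dnorm (IZR P + sg n d) = d.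
Proof.
  intros Hd. unfold dnorm, fracR, sg. destruct (Nat.even n).
  - rewrite <- (Int_part_spec (IZR P + d) P) by lra.
    replace (IZR P + d - IZR P) with d by ring. apply Rmin_left; lra.
  - rewrite <- (Int_part_spec (IZR P + - d) (P - 1)) by (rewrite minus_IZR; lra).
    rewrite minus_IZR. rewrite Rmin_right; lra.
Qed.

Lemma dnorm_q n : (2 <= n)%nat -> dnorm (INR (cf_q th n) * th) = dl th n.
Proof.
  intros Hn. destruct (pos_q n) as [P E]. rewrite E. apply dnorm_sg.
  split; [apply dl_pos|]. destruct n as [|[|n]]; try lia. apply dl_half.
Qed.
End CF.

Lemma count_ge N (P : nat -> Prop) (J : list nat) : NoDup J ->
  (forall j, In j J -> (1 <= j <= N)%nat /\ P j) -> (length J <= count_upto N P)%nat.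
Proof.
  revert J. induction N as [|M IH]; intros J ND HJ.
  - destruct J as [|x J]; simpl; [lia|]. destruct (HJ x (or_introl eq_refl)); lia.
  - simpl count_upto. destruct (in_dec Nat.eq_dec (S M) J) as [Hin|Hin].
    + destruct (in_split _ _ Hin) as [J1 [J2 E]]. subst J.
      destruct (NoDup_remove _ _ _ ND) as [ND' NI].
      destruct (HJ (S M) ltac:(apply in_or_app; right; left; reflexivity)) as [_ HP].
      destruct (excluded_middle_informative (P (S M))) as [_|n]; [|contradiction].
      rewrite length_app. simpl.
      assert (length (J1 ++ J2) <= count_upto M P)%nat.
      { apply IH; [exact ND'|]. intros j Hj.
        assert (j <> S M) by (intro; subst; contradiction).
        destruct (HJ j) as [H1 H2]. { apply in_app_or in Hj. apply in_or_app.
          destruct Hj; [left|right; right]; assumption. }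
        split; [lia|exact H2]. }
      rewrite length_app in H. lia.
    + assert (length J <= count_upto M P)%nat.
      { apply IH; [exact ND|]. intros j Hj.
        assert (j <> S M) by (intro; subst; contradiction).
        destruct (HJ j Hj). split; [lia|assumption]. }
      destruct (excluded_middle_informative _); lia.
Qed.

Fixpoint G (q : nat -> nat) (s : nat) (B0 B1 : list nat) (l : nat) : list nat :=
  match l with
  | O => B0
  | S l' => match l' with
            | O => B1
            | S l'' => G q s B0 B1 l' ++ map (fun d => (d + q (s + l'' + 1))%nat) (G q s B0 B1 l'')
            end
  end.

Lemma G_len q s B0 B1 l :
  length (G q s B0 B1 (S (S l))) = (length (G q s B0 B1 (S l)) + length (G q s B0 B1 l))%nat.
Proof. simpl G at 1. rewrite length_app, length_map. reflexivity. Qed.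

Definition posd th d e := exists z, INR d * th = e + IZR z.

Section Gen.
Variable th : R.
Hypothesis Hth : 0 < th < 1.
Hypothesis Hirr : irrational th.
Variables (s c L : nat) (Lo Hi : R) (B0 B1 : list nat).
Hypothesis Hc : (1 <= c)%nat.
Hypothesis Ha : forall j, (2 <= j <= L)%nat -> cf_a th (s + j) = 1%nat.

Definition Lb n := if Nat.even n then dl th n else dl th (S n).
Definition Ub n := if Nat.even n then dl th (S n) else dl th n.

Definition Inv l := NoDup (G (cf_q th) s B0 B1 l) /\
  forall d, In d (G (cf_q th) s B0 B1 l) -> (d + c <= cf_q th (s + l))%nat /\
    exists e, posd th d e /\ Lo + Lb (s + l) <= e <= Hi - Ub (s + l).

Hypothesis I0 : Inv 0.
Hypothesis I1 : Inv 1.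

Lemma Lb_mono n : Lb (S (S n)) <= Lb (S n).
Proof.
  unfold Lb. change (Nat.even (S (S n))) with (Nat.even n).
  rewrite Nat.even_succ, <- Nat.negb_even.
  pose proof (dl_dec th Hth Hirr (S n)). pose proof (dl_dec th Hth Hirr (S (S n))).
  destruct (Nat.even n); cbn [negb]; lra.
Qed.
Lemma Ub_mono n : Ub (S (S n)) <= Ub (S n).
Proof.
  unfold Ub. change (Nat.even (S (S n))) with (Nat.even n).
  rewrite Nat.even_succ, <- Nat.negb_even.
  pose proof (dl_dec th Hth Hirr (S n)). pose proof (dl_dec th Hth Hirr (S (S n))).
  destruct (Nat.even n); cbn [negb]; lra.
Qed.

Lemma step l : (l + 2 <= L)%nat -> Inv l -> Inv (S l) -> Inv (S (S l)).
Proof.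
  intros HL [N0 E0] [N1 E1].
  assert (Ha2 : cf_a th (S (S (s + l))) = 1%nat).
  { replace (S (S (s + l))) with (s + S (S l))%nat by lia. apply Ha. lia. }
  assert (Hq : cf_q th (s + S (S l)) = (cf_q th (s + S l) + cf_q th (s + l))%nat).
  { replace (s + S (S l))%nat with (S (S (s + l))) by lia. rewrite qSS, Ha2.
    replace (s + S l)%nat with (S (s + l)) by lia. lia. }
  replace (s + l + 1)%nat with (s + S l)%nat by lia.
  unfold Inv. change (G (cf_q th) s B0 B1 (S (S l))) with
    (G (cf_q th) s B0 B1 (S l) ++ map (fun d => (d + cf_q th (s + l + 1))%nat) (G (cf_q th) s B0 B1 l)).
  replace (s + l + 1)%nat with (s + S l)%nat by lia.
  split.
  - apply NoDup_app; [exact N1| |].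
    + apply NoDup_map_NoDup_ForallPairs; [intros x y _ _ H; lia | exact N0].
    + intros x Hx Hy. apply in_map_iff in Hy. destruct Hy as [d [Hd _]].
      destruct (E1 x Hx) as [R1 _]. lia.
  - intros d Hd. apply in_app_or in Hd. destruct Hd as [Hd|Hd].
    + destruct (E1 d Hd) as [R1 [e [Pe Be]]]. split; [lia|]. exists e. split; [exact Pe|].
      replace (s + S (S l))%nat with (S (S (s + l))) by lia.
      replace (s + S l)%nat with (S (s + l)) in Be by lia.
      pose proof (Lb_mono (s + l)). pose proof (Ub_mono (s + l)). lra.
    + apply in_map_iff in Hd. destruct Hd as [d0 [Hd Hin]]. subst d.
      destruct (E0 d0 Hin) as [R0 [e [[z Pe] Be]]]. split; [lia|].
      destruct (pos_q th Hth Hirr (s + S l)) as [P HP].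
      exists (e + sg (s + S l) (dl th (s + S l))). split.
      { exists (z + P)%Z. rewrite plus_INR, Rmult_plus_distr_r, Pe, HP, plus_IZR. ring. }
      pose proof (dl_rec th Hth Hirr (s + l)) as Hr. rewrite Ha2 in Hr.
      change (INR 1) with 1 in Hr. pose proof (dl_pos th Hth Hirr (S (s + l))).
      pose proof (dl_dec th Hth Hirr (S (s + l))). pose proof (dl_dec th Hth Hirr (S (S (s + l)))).
      replace (s + S (S l))%nat with (S (S (s + l))) by lia.
      replace (s + S l)%nat with (S (s + l)) by lia.
      revert Be. unfold Lb, Ub, sg. change (Nat.even (S (S (s + l)))) with (Nat.even (s + l)).
      rewrite Nat.even_succ, <- Nat.negb_even.
      destruct (Nat.even (s + l)); cbn [negb]; intros; lra.
Qed.

Lemma gen_inv l : (l <= L)%nat -> Inv l.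
Proof.
  assert (forall l, (l + 1 <= L)%nat -> Inv l /\ Inv (S l)).
  { induction l0 as [|l0 IH]; intros H. split; assumption.
    destruct (IH ltac:(lia)) as [A B]. split; [exact B|]. apply step; [lia|assumption|assumption]. }
  intros Hl. destruct l as [|l]; [exact I0|]. apply (H l). lia.
Qed.
End Gen.

Lemma fibSS n : fibu (S (S n)) = (fibu (S n) + fibu n)%nat.
Proof. unfold fibu. simpl. destruct (fibpair n). simpl. lia. Qed.

Lemma rt_le th n : (1 <= cf_a th n)%nat -> (rt_ th n + 1 <= cf_a th n)%nat.
Proof.
  intros H. unfold rt_, r_. generalize (cf_a th (S n)). intros b.
  generalize dependent (cf_a th n). intros a H.
  assert (Hr : ((if Nat.eqb a 2 then 1 else Nat.sqrt (4 * a + 5) - 3) + 1 <= a)%nat).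
  { destruct (Nat.eqb a 2) eqn:E2. apply Nat.eqb_eq in E2; lia.
    pose proof (Nat.sqrt_spec (4 * a + 5) (Nat.le_0_l _)) as [S1 S2].
    set (t := Nat.sqrt (4 * a + 5)) in *.
    assert (t <= a + 2)%nat.
    { destruct (le_lt_dec t (a + 2)) as [h|h]; [exact h|].
      assert ((a + 3) * (a + 3) <= t * t)%nat by (apply Nat.mul_le_mono; lia). nia. }
    lia. }
  destruct (Nat.eqb a 4) eqn:E4; destruct (Nat.leb 2 b); simpl; try exact Hr.
  apply Nat.eqb_eq in E4; lia.
Qed.

Lemma finish th (Hth : 0 < th < 1) (Hirr : irrational th) s c Lo Hi B0 B1 l' N i lo hi :
  Inv th s c Lo Hi B0 B1 l' -> (1 <= i <= c)%nat ->
  lo = INR i * th + Lo -> hi = INR i * th + Hi ->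
  (N <= length (G (cf_q th) s B0 B1 l'))%nat ->
  (N <= count_upto (cf_q th (s + l')) (fun j => in_arc lo hi (INR j * th)))%nat.
Proof.
  intros [ND E] Hi1 Elo Ehi HN. eapply Nat.le_trans; [exact HN|].
  rewrite <- (length_map (Nat.add i)). apply count_ge.
  - apply NoDup_map_NoDup_ForallPairs; [intros x y _ _ H; lia | exact ND].
  - intros j Hj. apply in_map_iff in Hj. destruct Hj as [d [Hd Hin]]. subst j.
    destruct (E d Hin) as [R [e [[z Pe] Be]]]. split; [lia|].
    exists (- z)%Z. rewrite plus_INR, Rmult_plus_distr_r, Pe, opp_IZR, Elo, Ehi.
    assert (0 < Lb th (s + l')).
    { unfold Lb; destruct (Nat.even _); apply dl_pos; assumption. }
    assert (0 < Ub th (s + l')).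
    { unfold Ub; destruct (Nat.even _); apply dl_pos; assumption. }
    lra.
Qed.

Lemma G_len_a q s B0 B1 r : length B0 = 1%nat -> length B1 = (r + 1)%nat ->
  forall l, length (G q s B0 B1 l) = (fibu l * r + fibu (l + 1))%nat.
Proof.
  intros H0 H1. assert (forall l, length (G q s B0 B1 l) = (fibu l * r + fibu (l + 1))%nat /\
     length (G q s B0 B1 (S l)) = (fibu (S l) * r + fibu (S l + 1))%nat).
  { induction l as [|l [A B]]. split; [exact H0| change (G q s B0 B1 1) with B1; rewrite H1; change (fibu 1) with 1%nat; change (fibu (1 + 1)) with 1%nat; lia].
    split; [exact B|]. rewrite G_len, A, B.
    replace (S (S l) + 1)%nat with (S (S (S l))) by lia.
    replace (S l + 1)%nat with (S (S l)) by lia. replace (l + 1)%nat with (S l) by lia.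
    rewrite !fibSS. nia. }
  intros l; apply H.
Qed.

Lemma G_len_b q s B0 B1 r : length B0 = (r + 1)%nat -> length B1 = (2 * (r + 1))%nat ->
  forall l, length (G q s B0 B1 l) = (fibu (l + 2) * (r + 1))%nat.
Proof.
  intros H0 H1. assert (forall l, length (G q s B0 B1 l) = (fibu (l + 2) * (r + 1))%nat /\
     length (G q s B0 B1 (S l)) = (fibu (S l + 2) * (r + 1))%nat).
  { induction l as [|l [A B]]. split; [change (G q s B0 B1 0) with B0; rewrite H0; change (fibu (0+2)) with 1%nat; lia | change (G q s B0 B1 1) with B1; rewrite H1; change (fibu (1+2)) with 2%nat; lia].
    split; [exact B|]. rewrite G_len, A, B.
    replace (S (S l) + 2)%nat with (S (S (l + 2))) by lia.
    replace (S l + 2)%nat with (S (l + 2)) by lia.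
    rewrite (fibSS (l + 2)). nia. }
  intros l; apply H.
Qed.

Lemma Lb_e th n : Nat.even n = true -> Lb th n = dl th n.
Proof. unfold Lb; intros ->; reflexivity. Qed.
Lemma Lb_o th n : Nat.even n = false -> Lb th n = dl th (S n).
Proof. unfold Lb; intros ->; reflexivity. Qed.
Lemma Ub_e th n : Nat.even n = true -> Ub th n = dl th (S n).
Proof. unfold Ub; intros ->; reflexivity. Qed.
Lemma Ub_o th n : Nat.even n = false -> Ub th n = dl th n.
Proof. unfold Ub; intros ->; reflexivity. Qed.

Definition S1 th k r := map (fun m => (m * cf_q th k)%nat) (seq 0 (r + 1)).

Lemma S1_nodup th k r : (1 <= cf_q th k)%nat -> NoDup (S1 th k r).
Proof. intros H. apply NoDup_map_NoDup_ForallPairs; [intros x y _ _ E; nia | apply seq_NoDup]. Qed.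
Lemma S1_len th k r : length (S1 th k r) = (r + 1)%nat.
Proof. unfold S1. rewrite length_map, length_seq. reflexivity. Qed.
Lemma S1_in th k r d : In d (S1 th k r) -> exists m, d = (m * cf_q th k)%nat /\ (m <= r)%nat.
Proof. unfold S1. intros H. apply in_map_iff in H. destruct H as [m [E H]].
  apply in_seq in H. exists m; split; [auto|lia]. Qed.

Theorem lemma4p3 (theta : R) (k l i : nat) :
  0 < theta < 1 -> irrational theta ->
  Nat.Even k -> (1 <= k)%nat -> (1 <= l)%nat ->
  (1 <= i <= cf_q theta k)%nat ->
  ((forall j : nat, (2 <= j <= l)%nat -> cf_a theta (k + j) = 1%nat) ->
   (fibu l * rt_ theta (k + 1) + fibu (l + 1) <=
    count_upto (cf_q theta (k + l))
      (fun j => in_arc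
         (INR i * theta - dnorm (INR (cf_q theta k) * theta))
         (INR i * theta + INR (rt_ theta (k + 1)) * dnorm (INR (cf_q theta k) * theta)
            + dnorm (INR (cf_q theta (k + 1)) * theta))
         (INR j * theta)))%nat)
  /\
  (cf_a theta (k + 2) = 2%nat ->
   (forall j : nat, (3 <= j <= l)%nat -> cf_a theta (k + j) = 1%nat) ->
   (fibu (l + 1) * (rt_ theta (k + 1) + 1) <=
    count_upto (cf_q theta (k + l))
      (fun j => in_arc
         (INR i * theta - dnorm (INR (cf_q theta (k + 1)) * theta)
            - dnorm (INR (cf_q theta (k + 2)) * theta))
         (INR i * theta + INR (rt_ theta (k + 1)) * dnorm (INR (cf_q theta k) * theta)
            + dnorm (INR (cf_q theta (k + 1)) * theta))
         (INR j * theta)))%nat).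
Proof.
  intros Hth Hirr Hev Hk Hl Hi. set (th := theta) in *.
  assert (Ek : Nat.even k = true) by (apply Nat.even_spec; exact Hev).
  assert (Ek1 : Nat.even (k + 1) = false).
  { rewrite Nat.add_1_r, Nat.even_succ, <- Nat.negb_even, Ek. reflexivity. }
  assert (Ek2 : Nat.even (k + 2) = true).
  { replace (k + 2)%nat with (S (S k)) by lia. exact Ek. }
  set (r := rt_ th (k + 1)).
  assert (Ha1 : (1 <= cf_a th (k + 1))%nat).
  { replace (k + 1)%nat with (S k) by lia. apply a_pos; assumption. }
  assert (Hr : (r + 1 <= cf_a th (k + 1))%nat) by (apply rt_le; exact Ha1).
  assert (Hq1 : (cf_a th (k + 1) * cf_q th k <= cf_q th (k + 1))%nat).
  { destruct k as [|k']; [lia|]. replace (S k' + 1)%nat with (S (S k')) by lia.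
    rewrite qSS. lia. }
  assert (Hqk := q_pos th Hth Hirr k).
  assert (Hqk1 := q_pos th Hth Hirr (k + 1)).
  destruct (pos_q th Hth Hirr k) as [Pk EPk].
  unfold sg in EPk. rewrite Ek in EPk.
  set (D0 := dl th k) in *. set (D1 := dl th (k + 1)). set (D2 := dl th (k + 2)).
  set (D3 := dl th (k + 3)).
  assert (HD : 0 < D3 < D2 /\ D2 < D1 /\ D1 < D0).
  { pose proof (dl_pos th Hth Hirr (k + 3)). pose proof (dl_dec th Hth Hirr k).
    pose proof (dl_dec th Hth Hirr (k + 1)). pose proof (dl_dec th Hth Hirr (k + 2)).
    replace (S k) with (k + 1)%nat in * by lia.
    replace (S (k + 1)) with (k + 2)%nat in * by lia.
    replace (S (k + 2)) with (k + 3)%nat in * by lia.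
    unfold D0, D1, D2, D3. lra. }
  assert (Dn0 : dnorm (INR (cf_q th k) * th) = D0) by (apply dnorm_q; auto; destruct Hev; lia).
  assert (Dn1 : dnorm (INR (cf_q th (k + 1)) * th) = D1) by (apply dnorm_q; auto; destruct Hev; lia).
  assert (Dn2 : dnorm (INR (cf_q th (k + 2)) * th) = D2) by (apply dnorm_q; auto; destruct Hev; lia).
  assert (Hr0 : 0 <= INR r) by apply pos_INR.
  assert (HD0 : 0 < D0) by lra.
  assert (S1p : forall d, In d (S1 th k r) -> (d + cf_q th k <= cf_q th (k + 1))%nat /\
             exists m, posd th d (INR m * D0) /\ 0 <= INR m <= INR r).
  { intros d Hd. destruct (S1_in th k r d Hd) as [m [Em Hm]]. subst d. split; [nia|].
    exists m. split.
    - exists (Z.of_nat m * Pk)%Z. rewrite mult_INR, mult_IZR, <- INR_IZR_INZ, Rmult_assoc, EPk. ring.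
    - split; [apply pos_INR | apply le_INR; exact Hm]. }
  split.
  - intros Ha.
    assert (Inv th k (cf_q th k) (- D0) (INR r * D0 + D1) (0%nat :: nil) (S1 th k r) l) as HI.
    { apply (gen_inv th Hth Hirr k (cf_q th k) l); try assumption; try lia.
      - split. { constructor; [simpl; tauto | constructor]. }
        intros d [Hd|[]]. subst d. rewrite Nat.add_0_r. split; [lia|].
        exists 0. split. { exists 0%Z. simpl. ring. }
        rewrite Lb_e, Ub_e by exact Ek. replace (S k) with (k + 1)%nat by lia. fold D1.
        assert (0 <= INR r * D0) by (apply Rmult_le_pos; lra). fold D0. lra.
      - split. { apply S1_nodup; exact Hqk. }
        intros d Hd. destruct (S1p d Hd) as [R [m [Pm Bm]]]. split; [exact R|].
        exists (INR m * D0). split; [exact Pm|].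
        rewrite Lb_o, Ub_o by exact Ek1. replace (S (k + 1)) with (k + 2)%nat by lia.
        fold D1 D2. nra. }
    eapply finish; try eassumption.
    + rewrite Dn0. ring.
    + rewrite Dn0, Dn1. fold r. ring.
    + rewrite (G_len_a _ _ _ _ r); [lia | reflexivity | apply S1_len].
  - intros Ha2 Ha.
    assert (Hq2 : cf_q th (k + 2) = (2 * cf_q th (k + 1) + cf_q th k)%nat).
    { replace (k + 2)%nat with (S (S k)) by lia. rewrite qSS.
      replace (S (S k)) with (k + 2)%nat by lia. rewrite Ha2.
      replace (S k) with (k + 1)%nat by lia. lia. }
    destruct (pos_q th Hth Hirr (k + 1)) as [P1 EP1].
    unfold sg in EP1. rewrite Ek1 in EP1. fold D1 in EP1.
    set (B1 := S1 th k r ++ map (fun d => (d + cf_q th (k + 1))%nat) (S1 th k r)).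
    assert (Inv th (k + 1) (cf_q th k) (- D1 - D2) (INR r * D0 + D1) (S1 th k r) B1 (l - 1)) as HI.
    { apply (gen_inv th Hth Hirr (k + 1) (cf_q th k) (l - 1)); try assumption; try lia.
      - intros j Hj. replace (k + 1 + j)%nat with (k + (j + 1))%nat by lia. apply Ha. lia.
      - split. { apply S1_nodup; exact Hqk. }
        intros d Hd. destruct (S1p d Hd) as [R [m [Pm Bm]]].
        rewrite Nat.add_0_r. split; [exact R|].
        exists (INR m * D0). split; [exact Pm|].
        rewrite Lb_o, Ub_o by exact Ek1. replace (S (k + 1)) with (k + 2)%nat by lia.
        fold D1 D2. nra.
      - unfold Inv. replace (k + 1 + 1)%nat with (k + 2)%nat by lia.
        rewrite Lb_e, Ub_e by exact Ek2. replace (S (k + 2)) with (k + 3)%nat by lia. fold D2 D3.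
        split.
        + apply NoDup_app; [apply S1_nodup; exact Hqk| |].
          * apply NoDup_map_NoDup_ForallPairs; [intros x y _ _ H; lia | apply S1_nodup; exact Hqk].
          * intros x Hx Hy. apply in_map_iff in Hy. destruct Hy as [d [Hd _]].
            destruct (S1p x Hx) as [R _]. lia.
        + intros d Hd. apply in_app_or in Hd. destruct Hd as [Hd|Hd].
          * destruct (S1p d Hd) as [R [m [Pm Bm]]]. split; [lia|].
            exists (INR m * D0). split; [exact Pm|]. nra.
          * apply in_map_iff in Hd. destruct Hd as [d0 [Hd Hin]]. subst d.
            destruct (S1p d0 Hin) as [R [m [[z Pm] Bm]]]. split; [lia|].
            exists (INR m * D0 - D1). split.
            { exists (z + P1)%Z. rewrite plus_INR, Rmult_plus_distr_r, Pm, EP1, plus_IZR. ring. }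
            nra. }
    replace (k + l)%nat with (k + 1 + (l - 1))%nat by lia.
    eapply finish; try eassumption.
    + rewrite Dn1, Dn2. ring.
    + rewrite Dn0, Dn1. fold r. ring.
    + rewrite (G_len_b _ _ _ _ r); [| apply S1_len |].
      * replace (l - 1 + 2)%nat with (l + 1)%nat by lia. lia.
      * unfold B1. rewrite length_app, length_map, S1_len. lia.
Qed.
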